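(* Let $X$, $Y$ be real Banach spaces, $\Omega$ a measure space, $Z:=L^2(\Omega)$, and $e:Y\to Z$ a linear continuous dense embedding. Let $f:X\to\mathbb{R}$ and $g:X\to Y$ be continuously Fréchet differentiable. Let $(x^k)$ be generated by the augmented Lagrangian algorithm described in the context, where in Step 2 the iterate $x^{k+1}$ is chosen such that $L_{\rho_k}'(x^{k+1},w^k)\to 0$ in $X^*$ as $k\to\infty$ (derivative with respect to $x$). If $\bar x$ is a (strong) limit point of $(x^k)$, then $D\|g_+(\bar x)\|_Z^2=2g'(\bar x)^*g_+(\bar x)=0$, i.e. $\bar x$ is a stationary point of $x\mapsto\|g_+(x)\|_Z^2$.
   Context: The order on $Y$ is induced by $Z$ via $e$ (pointwise a.e.). For $z\in Z$, $z_+:=\max\{z,0\}$ pointwise; $g_+(x):=(e(g(x)))_+$; $\min$ in $Z$ is pointwise; $g'(x)^*$ denotes the adjoint of $e\circ g'(x):X\to Z$ with $Z\cong Z^*$. The augmented Lagrangian is $L_\rho(x,\lambda):=f(x)+\frac{\rho}{2}\|(g(x)+\lambda/\rho)_+\|_Z^2$, whose $x$-derivative is $f'(x)+g'(x)^*(\lambda+\rho g(x))_+$. Algorithm: (S.0) Choose $(x^0,\lambda^0)\in X\times Z$, $\rho_0>0$, $w^{\max}\in Z$ with $w^{\max}\ge 0$, $\gamma>1$, $\tau\in(0,1)$; $k=0$. (S.2) Choose $w^k\in Z$ with $0\le w^k\le w^{\max}$ a.e. and compute an approximate minimizer $x^{k+1}$ of $L_{\rho_k}(\cdot,w^k)$.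 (S.3) Set $\lambda^{k+1}:=(w^k+\rho_k g(x^{k+1}))_+$. If $k=0$ or $\|\min\{-g(x^{k+1}),w^k/\rho_k\}\|_Z\le\tau\|\min\{-g(x^k),w^{k-1}/\rho_{k-1}\}\|_Z$, set $\rho_{k+1}:=\rho_k$; else $\rho_{k+1}:=\gamma\rho_k$. (S.4) $k\leftarrow k+1$, go to (S.2). The algorithm is run without stopping. *)

(* Defs.v *)
From HB Require Import structures.
From mathcomp Require Import all_boot all_order all_algebra.
From mathcomp Require Import all_classical all_reals all_analysis.
Set Implicit Arguments. Unset Strict Implicit. Unset Printing Implicit Defensive.
Import Order.TTheory GRing.Theory Num.Theory.
Import numFieldNormedType.Exports.
Local Open Scope classical_set_scope.
Local Open Scope ring_scope.

Section C1.
Context {R : realType} {V W : normedModType R}.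
Definition C1_Frechet (f : V -> W) : Prop :=
  (forall x, differentiable f x) /\
  (forall x (eps : R), 0 < eps ->
     \forall x' \near x, forall h : V, `|'d f x' h - 'd f x h| <= eps * `|h|).
End C1.

(* ---------- Z = L^2(Omega), elements represented by functions ---------- *)
Section L2.
Context {d : measure_display} {T : measurableType d} {R : realType}
        (mu : {measure set T -> \bar R}).

Definition L2mem (z : T -> R) : Prop :=
  measurable_fun setT z /\ mu.-integrable setT (fun t => ((z t) ^+ 2)%:E).

Definition L2ip (z1 z2 : T -> R) : R := \int[mu]_(t in setT) (z1 t * z2 t).
Definition L2norm (z : T -> R) : R := Num.sqrt (\int[mu]_(t in setT) (z t ^+ 2)).

Definition zpos (z : T -> R) : T -> R := fun t => Num.max (z t) 0.
Definition zmin (z1 z2 : T -> R) : T -> R := fun t => Num.min (z1 t) (z2 t).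

Definition ae_le (z1 z2 : T -> R) : Prop := {ae mu, forall t, z1 t <= z2 t}.

(* e : Y -> Z linear, continuous, injective (into L^2, i.e. modulo a.e.),
   with dense range *)
Definition dense_embedding {Y : normedModType R} (e : Y -> T -> R) : Prop :=
  [/\ (forall (a : R) (y1 y2 : Y), e (a *: y1 + y2) = (fun t => a * e y1 t + e y2 t)),
      (forall y, L2mem (e y)),
      (exists C : R, forall y, L2norm (e y) <= C * `|y|),
      (forall y, {ae mu, forall t, e y t = 0} -> y = 0) &
      (forall z, L2mem z -> forall eps : R, 0 < eps ->
          exists y, L2norm (fun t => e y t - z t) < eps)].

Context {X Y : normedModType R}.
Variables (f : X -> R) (g : X -> Y) (e : Y -> T -> R).

(* x-derivative of L_rho(., lam) at x applied to h:
   f'(x)h + < (lam + rho g(x))_+ , e(g'(x)h) >_Z *)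
Definition dL (rho : R) (lam : T -> R) (x h : X) : R :=
  'd f x h + L2ip (zpos (fun t => lam t + rho * e (g x) t)) (e ('d g x h)).

Definition alm_res (x : nat -> X) (w : nat -> T -> R) (rho : nat -> R) (k : nat) : R :=
  L2norm (zmin (fun t => - e (g (x k.+1)) t) (fun t => w k t / rho k)).

Definition ALM_run (x : nat -> X) (lam : nat -> T -> R) (rho : nat -> R)
    (w : nat -> T -> R) (wmax : T -> R) (gamma tau : R) : Prop :=
  L2mem (lam 0%N) /\ 0 < rho 0%N /\ L2mem wmax /\ ae_le (fun=> 0) wmax /\
  1 < gamma /\ (0 < tau /\ tau < 1) /\
  (forall k, L2mem (w k) /\ ae_le (fun=> 0) (w k) /\ ae_le (w k) wmax) /\
  (forall k, lam k.+1 = zpos (fun t => w k t + rho k * e (g (x k.+1)) t)) /\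
  (forall k, rho k.+1 =
      if (k == 0)%N || (alm_res x w rho k <= tau * alm_res x w rho k.-1)
      then rho k else gamma * rho k).

Definition dL_to_zero (x : nat -> X) (rho : nat -> R) (w : nat -> T -> R) : Prop :=
  forall eps : R, 0 < eps ->
    \forall k \near \oo, forall h : X, `|dL (rho k) (w k) (x k.+1) h| <= eps * `|h|.
End L2.

(* Main.v *)
Require Import Defs.
From HB Require Import structures.
From mathcomp Require Import all_boot all_order all_algebra.
From mathcomp Require Import all_classical all_reals all_analysis.
From mathcomp Require Import ring lra measurable_realfun.
Import Order.TTheory GRing.Theory Num.Theory.
Import numFieldNormedType.Exports.
Local Open Scope classical_set_scope.
Local Open Scope ring_scope.
Set Implicit Arguments. Unset Strict Implicit.

Section L2tools.
Context {d : measure_display} {T : measurableType d} {R : realType}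
        (mu : {measure set T -> \bar R}).

Lemma sqr_normr (x : R) : `|x| ^+ 2 = x ^+ 2.
Proof. exact: real_normK (num_real x). Qed.

Definition Nsq (z : T -> R) : R := \int[mu]_(t in setT) (z t ^+ 2).

Lemma int_add (f g : T -> R) : mu.-integrable setT (EFin \o f) ->
  mu.-integrable setT (EFin \o g) ->
  mu.-integrable setT (EFin \o (fun t => f t + g t)).
Proof.
move=> hf hg; apply: eq_integrable (integrableD _ hf hg) => //.
Qed.

Lemma int_scale (k : R) (f : T -> R) : mu.-integrable setT (EFin \o f) ->
  mu.-integrable setT (EFin \o (fun t => k * f t)).
Proof.
move=> hf; apply: eq_integrable (integrableZl _ k hf) => //.
Qed.

Lemma int_sub (f g : T -> R) : mu.-integrable setT (EFin \o f) ->
  mu.-integrable setT (EFin \o g) ->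
  mu.-integrable setT (EFin \o (fun t => f t - g t)).
Proof.
move=> hf hg; apply: eq_integrable (integrableB _ hf hg) => //.
Qed.

Lemma L2_domsq (u v : T -> R) : measurable_fun setT u ->
  mu.-integrable setT (EFin \o v) -> (forall t, u t ^+ 2 <= v t) -> L2mem mu u.
Proof.
move=> mu_ iv le; split => //; apply: le_integrable iv => //.
  apply/measurable_EFinP; exact: measurable_funX.
move=> t _ /=; rewrite lee_fin ger0_norm ?sqr_ge0//.
exact: le_trans (le t) (ler_norm _).
Qed.

Lemma L2_meas z : L2mem mu z -> measurable_fun setT z. Proof. by case. Qed.
Lemma L2_int z : L2mem mu z -> mu.-integrable setT (EFin \o (fun t => z t ^+ 2)).
Proof. by case. Qed.

Lemma int_mul u v : L2mem mu u -> L2mem mu v ->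
  mu.-integrable setT (EFin \o (fun t => u t * v t)).
Proof.
move=> hu hv; apply: le_integrable (int_add (L2_int hu) (L2_int hv)) => //.
  apply/measurable_EFinP; exact: measurable_funM (L2_meas hu) (L2_meas hv).
move=> t _ /=; rewrite lee_fin [X in _ <= X]ger0_norm ?addr_ge0 ?sqr_ge0//.
rewrite normrM; have := sqr_normr (u t); have := sqr_normr (v t).
have := normr_ge0 (u t); have := normr_ge0 (v t). nra.
Qed.

Lemma L2_add u v : L2mem mu u -> L2mem mu v -> L2mem mu (fun t => u t + v t).
Proof.
move=> hu hv; apply: (L2_domsq (v := fun t => 2 * u t ^+ 2 + 2 * v t ^+ 2)).
- exact: measurable_funD (L2_meas hu) (L2_meas hv).
- exact: int_add (int_scale _ (L2_int hu)) (int_scale _ (L2_int hv)).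
- move=> t; have := sqr_ge0 (u t - v t); have := sqr_ge0 (u t + v t); nra.
Qed.

Lemma L2_scale a u : L2mem mu u -> L2mem mu (fun t => a * u t).
Proof.
move=> hu; apply: (L2_domsq (v := fun t => a ^+ 2 * u t ^+ 2)).
- apply: measurable_funM => //; exact: L2_meas.
- exact: int_scale (L2_int hu).
- move=> t; rewrite exprMn //.
Qed.

Lemma L2_sub u v : L2mem mu u -> L2mem mu v -> L2mem mu (fun t => u t - v t).
Proof.
move=> hu hv; apply: (L2_domsq (v := fun t => 2 * u t ^+ 2 + 2 * v t ^+ 2)).
- exact: measurable_funB (L2_meas hu) (L2_meas hv).
- exact: int_add (int_scale _ (L2_int hu)) (int_scale _ (L2_int hv)).
- move=> t; have := sqr_ge0 (u t - v t); have := sqr_ge0 (u t + v t); nra.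
Qed.

Lemma L2_pos u : L2mem mu u -> L2mem mu (zpos u).
Proof.
move=> hu; apply: (L2_domsq (v := fun t => u t ^+ 2)).
- apply: measurable_maxr => //; exact: L2_meas.
- exact: L2_int.
- move=> t; rewrite /zpos; case: (leP (u t) 0) => h.
  + by rewrite expr0n sqr_ge0.
  + by [].
Qed.

Lemma L2_min u v : L2mem mu u -> L2mem mu v -> L2mem mu (zmin u v).
Proof.
move=> hu hv; apply: (L2_domsq (v := fun t => u t ^+ 2 + v t ^+ 2)).
- exact: measurable_minr (L2_meas hu) (L2_meas hv).
- exact: int_add (L2_int hu) (L2_int hv).
- move=> t; rewrite /zmin; case: (leP (u t) (v t)) => h.
  + have := sqr_ge0 (v t); lra.
  + have := sqr_ge0 (u t); lra.
Qed.


Lemma L2ip_ext u1 u2 v1 v2 : (forall t, u1 t * v1 t = u2 t * v2 t) ->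
  L2ip mu u1 v1 = L2ip mu u2 v2.
Proof. by move=> h; apply: eq_Rintegral => t _; exact: h. Qed.

Lemma Nsq_ext u v : (forall t, u t ^+ 2 = v t ^+ 2) -> Nsq u = Nsq v.
Proof. by move=> h; apply: eq_Rintegral => t _; exact: h. Qed.

Lemma L2norm_ext u v : (forall t, u t ^+ 2 = v t ^+ 2) -> L2norm mu u = L2norm mu v.
Proof. by move=> h; rewrite /L2norm; congr Num.sqrt; exact: (Nsq_ext h). Qed.

Lemma Nsq_ge0 u : 0 <= Nsq u.
Proof. by apply: Rintegral_ge0 => t _; exact: sqr_ge0. Qed.

Lemma L2norm_ge0 u : 0 <= L2norm mu u.
Proof. exact: sqrtr_ge0. Qed.

Lemma L2normK u : L2norm mu u ^+ 2 = Nsq u.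
Proof. by rewrite /L2norm sqr_sqrtr //; exact: Nsq_ge0. Qed.

Lemma L2ip_linr a u v1 v2 : L2mem mu u -> L2mem mu v1 -> L2mem mu v2 ->
  L2ip mu u (fun t => a * v1 t + v2 t) = a * L2ip mu u v1 + L2ip mu u v2.
Proof.
move=> hu h1 h2; rewrite /L2ip.
transitivity (\int[mu]_(t in setT) (a * (u t * v1 t) + u t * v2 t)).
  by apply: eq_Rintegral => t _; rewrite mulrDr mulrCA.
rewrite RintegralD //; last exact: int_mul.
  by rewrite RintegralZl //; exact: int_mul.
exact/int_scale/int_mul.
Qed.

Lemma L2ip_scalel a u v : L2mem mu u -> L2mem mu v ->
  L2ip mu (fun t => a * u t) v = a * L2ip mu u v.
Proof.
move=> hu hv; rewrite /L2ip -RintegralZl //; last exact: int_mul.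
by apply: eq_Rintegral => t _; rewrite mulrA.
Qed.

Lemma L2ip_sym u v : L2ip mu u v = L2ip mu v u.
Proof. by apply: L2ip_ext => t; rewrite mulrC. Qed.

Lemma Nsq_scale a u : L2mem mu u -> Nsq (fun t => a * u t) = a ^+ 2 * Nsq u.
Proof.
move=> hu; rewrite /Nsq -RintegralZl //; last exact: L2_int.
by apply: eq_Rintegral => t _; rewrite exprMn.
Qed.

Lemma L2norm_scale a u : L2mem mu u -> L2norm mu (fun t => a * u t) = `|a| * L2norm mu u.
Proof.
move=> hu; rewrite /L2norm -/(Nsq _) -/(Nsq _) Nsq_scale // sqrtrM ?sqr_ge0 //.
by rewrite sqrtr_sqr.
Qed.

Lemma Nsq_le_ae u v : L2mem mu u -> L2mem mu v ->
  {ae mu, forall t, u t ^+ 2 <= v t ^+ 2} -> Nsq u <= Nsq v.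
Proof.
move=> hu hv hae; rewrite /Nsq /Rintegral; apply: fine_le.
- exact: (integrable_fin_num measurableT (L2_int hu)).
- exact: (integrable_fin_num measurableT (L2_int hv)).
apply: ae_ge0_le_integral => //.
- by move=> t _; rewrite lee_fin sqr_ge0.
- apply/measurable_EFinP; apply: measurable_funX; exact: L2_meas.
- by move=> t _; rewrite lee_fin sqr_ge0.
- apply/measurable_EFinP; apply: measurable_funX; exact: L2_meas.
- by apply: filterS hae => t h _; rewrite lee_fin.
Qed.

Lemma L2norm_le_ae u v : L2mem mu u -> L2mem mu v ->
  {ae mu, forall t, u t ^+ 2 <= v t ^+ 2} -> L2norm mu u <= L2norm mu v.
Proof.
move=> hu hv hae; rewrite /L2norm ler_sqrt; last exact: Nsq_ge0.
exact: Nsq_le_ae.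
Qed.

Lemma L2norm_le u v : L2mem mu u -> L2mem mu v ->
  (forall t, `|u t| <= `|v t|) -> L2norm mu u <= L2norm mu v.
Proof.
move=> hu hv h; apply: L2norm_le_ae => //; apply: aeW => t.
rewrite -sqr_normr -(sqr_normr (v t)); have := h t; have := normr_ge0 (u t).
nra.
Qed.


Lemma CS_aux (P A B : R) : 0 <= A -> 0 <= B ->
  (forall s, 0 < s -> P <= (s * A + s^-1 * B) / 2) -> P <= Num.sqrt A * Num.sqrt B.
Proof.
move=> A0 B0 H; set a := Num.sqrt A; set b := Num.sqrt B.
have a0 : 0 <= a by exact: sqrtr_ge0.
have b0 : 0 <= b by exact: sqrtr_ge0.
have EA : A = a ^+ 2 by rewrite sqr_sqrtr.
have EB : B = b ^+ 2 by rewrite sqr_sqrtr.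
apply/ler_addgt0Pr => eps eps0.
have ab1 : 0 < a + b + 1 by lra.
set del := eps / (a + b + 1).
have del0 : 0 < del by exact: divr_gt0.
have hdel : del * (a + b) <= eps.
  rewrite /del mulrAC ler_pdivrMr //; nra.
have p0 : 0 < a + del by lra.
have q0 : 0 < b + del by lra.
set s := (b + del) / (a + del).
have s0 : 0 < s by exact: divr_gt0.
apply: (le_trans (H s s0)).
have h1 : s * A <= (b + del) * a.
  rewrite EA /s mulrAC ler_pdivrMr //.
  have := mulr_ge0 (mulr_ge0 (ltW q0) a0) (ltW del0); nra.
have h2 : s^-1 * B <= (a + del) * b.
  rewrite EB /s invf_div mulrAC ler_pdivrMr //.
  have := mulr_ge0 (mulr_ge0 (ltW p0) b0) (ltW del0); nra.
lra.
Qed.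

Lemma CS u v : L2mem mu u -> L2mem mu v ->
  `|L2ip mu u v| <= L2norm mu u * L2norm mu v.
Proof.
move=> hu hv; apply: CS_aux; try exact: Nsq_ge0.
move=> s s0; have r0 : 0 < s^-1 by rewrite invr_gt0.
have sr : s^-1 * s = 1 by rewrite mulVf // gt_eqF.
have H1 := le_normr_Rintegral measurableT (int_mul hu hv).
rewrite /L2ip; apply: le_trans H1 _.
apply: le_trans (le_Rintegral (f2 := fun t => s / 2 * u t ^+ 2 + s^-1 / 2 * v t ^+ 2) _ _ _ _) _ => //.
- exact: integrable_norm (int_mul hu hv).
- exact: int_add (int_scale _ (L2_int hu)) (int_scale _ (L2_int hv)).
- move=> t _; rewrite normrM -(sqr_normr (u t)) -(sqr_normr (v t)).
  set x := `|u t|; set y := `|v t|.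
  have := mulr_ge0 (ltW r0) (sqr_ge0 (s * x - y)).
  have -> : s^-1 * (s * x - y) ^+ 2 = (s^-1 * s) * (s * x ^+ 2) - 2 * (s^-1 * s) * x * y + s^-1 * y ^+ 2 by ring.
  rewrite sr; lra.
- rewrite RintegralD //; last 2 first.
  + exact: int_scale (L2_int hu).
  + exact: int_scale (L2_int hv).
  rewrite !RintegralZl //; try exact: L2_int.
  rewrite -/(Nsq u) -/(Nsq v); lra.
Qed.

Lemma Nsq_add u v : L2mem mu u -> L2mem mu v ->
  Nsq (fun t => u t + v t) = Nsq u + 2 * L2ip mu u v + Nsq v.
Proof.
move=> hu hv; rewrite /Nsq /L2ip.
transitivity (\int[mu]_(t in setT) (u t ^+ 2 + (2 * (u t * v t) + v t ^+ 2))).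
  by apply: eq_Rintegral => t _; ring.
rewrite RintegralD //; first last.
- exact: int_add (int_scale _ (int_mul hu hv)) (L2_int hv).
- exact: L2_int.
rewrite RintegralD //; first last.
- exact: L2_int.
- exact: int_scale (int_mul hu hv).
rewrite RintegralZl //; last exact: int_mul.
by rewrite addrA.
Qed.

Lemma L2norm_tri u v w : L2mem mu u -> L2mem mu v -> (forall t, w t = u t + v t) ->
  L2norm mu w <= L2norm mu u + L2norm mu v.
Proof.
move=> hu hv hw.
rewrite (L2norm_ext (v := fun t => u t + v t)); last by move=> t; rewrite hw.
have c0 : 0 <= L2norm mu u + L2norm mu v by rewrite addr_ge0 // L2norm_ge0.
rewrite -(ger0_norm c0) -sqrtr_sqr /L2norm ler_sqrt; last exact: sqr_ge0.
rewrite -/(Nsq _) Nsq_add // -!L2normK.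
have := CS hu hv; have := ler_norm (L2ip mu u v).
set p := L2ip mu u v; set a := L2norm mu u; set b := L2norm mu v.
move=> h1 h2; apply: (@le_trans _ _ ((a + b) ^+ 2)); last by []. nra.
Qed.

End L2tools.

Section DiffTools.
Context {R : realType}.

Lemma lin_cont (V W : normedModType R) (f : {linear V -> W}) (K : R) :
  (forall x, `|f x| <= K * `|x|) -> continuous f.
Proof.
move=> hK; apply/bounded_linear_continuous/linear_boundedP.
exists K; split; first exact: num_real.
move=> r Kr x; apply: le_trans (hK x) _; apply: ler_wpM2r => //.
exact: ltW.
Qed.

Lemma diff_from_est (V W : normedModType R) (f : V -> W) (df : {linear V -> W}) (x : V) :
  continuous df ->
  (forall eps : R, 0 < eps -> \forall h \near (0:V), `|f (h + x) - f x - df h| <= eps * `|h|) ->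
  differentiable f x /\ 'd f x = df :> (V -> W).
Proof.
move=> dfc hest.
have E : f \o shift x = cst (f x) + df +o_ 0 id.
  apply/eqaddoP => eps eps0; have := hest eps eps0; apply: filterS => h /=.
  by rewrite opprD addrA.
have D := diff_unique dfc E.
split => //; apply/diff_locallyP; rewrite D; split => //.
Qed.

End DiffTools.

Section PhiDiff.
Context {d : measure_display} {T : measurableType d} {R : realType}
        (mu : {measure set T -> \bar R}) {Y : normedModType R} (e : Y -> T -> R).
Context (elin : forall (a : R) (y1 y2 : Y), e (a *: y1 + y2) = (fun t => a * e y1 t + e y2 t))
  (eL2 : forall y, L2mem mu (e y)) (C : R) (eC : forall y, L2norm mu (e y) <= C * `|y|).

Lemma e0 t : e 0 t = 0.
Proof.
have := congr1 (fun f => f t) (elin 1 0 0); rewrite scaler0 addr0 mul1r /=.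
lra.
Qed.

Lemma eD y1 y2 t : e (y1 + y2) t = e y1 t + e y2 t.
Proof. by have := congr1 (fun f => f t) (elin 1 y1 y2); rewrite scale1r mul1r. Qed.

Lemma eZ a y t : e (a *: y) t = a * e y t.
Proof. by have := congr1 (fun f => f t) (elin a y 0); rewrite addr0 e0 addr0. Qed.

Lemma eB y1 y2 t : e (y1 - y2) t = e y1 t - e y2 t.
Proof. by rewrite eD -scaleN1r eZ mulN1r. Qed.

Lemma eC' y : L2norm mu (e y) <= `|C| * `|y|.
Proof. apply: le_trans (eC y) _; apply: ler_wpM2r => //; exact: ler_norm. Qed.

Definition Phi (y : Y) : R := L2norm mu (zpos (e y)) ^+ 2.
Definition DPhi (y0 : Y) (u : Y) : R := 2 * L2ip mu (zpos (e y0)) (e u).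

Lemma DPhi_lin y0 : linear (DPhi y0).
Proof.
move=> a u v; rewrite /DPhi elin L2ip_linr //; last exact: L2_pos.
by rewrite /GRing.scale /=; ring.
Qed.

Definition DPhiL y0 : {linear Y -> R} := HB.pack (DPhi y0) (GRing.isLinear.Build _ _ _ _ _ (DPhi_lin y0)).

Lemma DPhi_bound y0 u : `|DPhi y0 u| <= 2 * L2norm mu (zpos (e y0)) * `|C| * `|u|.
Proof.
rewrite /DPhi normrM ger0_norm // -!mulrA ler_pM2l //.
apply: le_trans (CS (L2_pos (eL2 y0)) (eL2 u)) _.
by apply: ler_wpM2l; [exact: L2norm_ge0 | exact: eC'].
Qed.

Lemma pos_est (A B : R) :
  `|Num.max (A + B) 0 ^+ 2 - Num.max A 0 ^+ 2 - 2 * Num.max A 0 * B| <= B ^+ 2.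
Proof.
rewrite ler_norml; case: (leP A 0) => hA; case: (leP (A + B) 0) => hAB.
all: rewrite ?expr0n /=; have := sqr_ge0 B; move=> ?; apply/andP; split; nra.
Qed.

Lemma Phi_est y0 u : `|Phi (u + y0) - Phi y0 - DPhi y0 u| <= `|C| ^+ 2 * `|u| ^+ 2.
Proof.
have hA := L2_pos (eL2 y0); have hB := eL2 u; have hAB := L2_pos (eL2 (u + y0)).
have -> : Phi (u + y0) - Phi y0 - DPhi y0 u =
   \int[mu]_(t in setT) (zpos (e (u + y0)) t ^+ 2 - zpos (e y0) t ^+ 2 - 2 * (zpos (e y0) t * e u t)).
  rewrite RintegralB //; last 2 first.
  - by apply: int_sub; exact: L2_int.
  - by apply: (int_scale 2); exact: int_mul.
  rewrite RintegralB //; try exact: L2_int.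
  rewrite RintegralZl //; last exact: int_mul.
  by rewrite /Phi !L2normK.
have Hint : mu.-integrable setT (EFin \o (fun t => zpos (e (u + y0)) t ^+ 2 - zpos (e y0) t ^+ 2 - 2 * (zpos (e y0) t * e u t))).
  apply: int_sub; last by apply: (int_scale 2); exact: int_mul.
  by apply: int_sub; exact: L2_int.
apply: le_trans (le_normr_Rintegral measurableT Hint) _.
apply: (@le_trans _ _ (Nsq mu (e u))).
  apply: le_Rintegral => //; first exact: integrable_norm Hint.
  - exact: L2_int.
  - move=> t _; rewrite /zpos eD [e u t + _]addrC mulrA; exact: pos_est.
rewrite -L2normK -exprMn; apply: lerXn2r; try by rewrite nnegrE ?L2norm_ge0 ?mulr_ge0.
exact: eC'.
Qed.

Lemma Phi_diff y0 : differentiable Phi y0 /\ 'd Phi y0 = DPhi y0 :> (Y -> R).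
Proof.
have K0 : 0 <= 2 * L2norm mu (zpos (e y0)) * `|C| by rewrite !mulr_ge0 // L2norm_ge0.
have Hc : continuous (DPhiL y0).
  by apply: (@lin_cont R Y R _ (2 * L2norm mu (zpos (e y0)) * `|C|)) => x; exact: DPhi_bound.
apply: (@diff_from_est R Y R Phi (DPhiL y0) y0 Hc).
move=> eps eps0.
have c0 : 0 < eps / (`|C| ^+ 2 + 1) by rewrite divr_gt0 // ltr_wpDl // sqr_ge0.
have : \forall h \near (0 : Y), `|h| < eps / (`|C| ^+ 2 + 1).
  by apply/nbhs_norm0P; exists (eps / (`|C| ^+ 2 + 1)).
apply: filterS => h hh.
apply: le_trans (Phi_est y0 h) _.
have hC := sqr_ge0 `|C|.
move: hh; rewrite ltr_pdivlMr ?ltr_wpDl //.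
have := normr_ge0 h; nra.
Qed.

End PhiDiff.

Section KeyEst.
Context {d : measure_display} {T : measurableType d} {R : realType}
        (mu : {measure set T -> \bar R}).

Lemma L2ip_addr u v v1 v2 : L2mem mu u -> L2mem mu v1 -> L2mem mu v2 ->
  (forall t, v t = v1 t + v2 t) -> L2ip mu u v = L2ip mu u v1 + L2ip mu u v2.
Proof.
move=> hu h1 h2 hv.
have -> : L2ip mu u v = L2ip mu u (fun t => 1 * v1 t + v2 t).
  by apply: L2ip_ext => t; rewrite hv mul1r.
by rewrite L2ip_linr // mul1r.
Qed.

Lemma L2ip_addl u u1 u2 v : L2mem mu u1 -> L2mem mu u2 -> L2mem mu v ->
  (forall t, u t = u1 t + u2 t) -> L2ip mu u v = L2ip mu u1 v + L2ip mu u2 v.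
Proof.
move=> h1 h2 hv hu; rewrite L2ip_sym (L2ip_addr hv h1 h2 hu).
by rewrite !(L2ip_sym _ v).
Qed.

Lemma pos_lip (x y : R) : `|Num.max x 0 - Num.max y 0| <= `|x - y|.
Proof.
case: (leP x 0) => hx; case: (leP y 0) => hy; rewrite ?subrr ?normr0 //.
- rewrite sub0r normrN gtr0_norm // [X in _ <= X]ler0_norm; lra.
- rewrite subr0 gtr0_norm // [X in _ <= X]ger0_norm; lra.
Qed.

Lemma pos_scale (r x : R) : 0 < r -> Num.max (r * x) 0 = r * Num.max x 0.
Proof.
move=> r0; case: (leP x 0) => hx; case: (leP (r * x) 0) => hrx //; try nra.
Qed.

Lemma key_est (A Ak B Bk wk : T -> R) (rho del Dk D hn c Wn : R) :
  L2mem mu A -> L2mem mu Ak -> L2mem mu B -> L2mem mu Bk -> L2mem mu wk ->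
  0 < del -> del <= 1 -> 0 < rho -> 1 < del * rho ->
  0 <= c -> 0 <= hn -> 0 <= Wn ->
  L2norm mu wk <= Wn ->
  `|Dk + L2ip mu (zpos (fun t => wk t + rho * Ak t)) Bk| <= del * hn ->
  `|Dk - D| <= hn ->
  L2norm mu (fun t => A t - Ak t) <= c * del ->
  L2norm mu (fun t => Bk t - B t) <= c * del * hn ->
  `|L2ip mu (zpos A) B| <=
    del * ((c + Wn) * L2norm mu B + (L2norm mu (zpos A) + c + Wn) * c * hn + 2 * hn + `|D|).
Proof.
move=> hA hAk hB hBk hw d0 d1 r0 dr c0 hn0 W0 hW hdL hD hAA hBB.
set an := zpos (fun t => rho^-1 * wk t + Ak t).
have han : L2mem mu an by apply/L2_pos/L2_add => //; exact: L2_scale.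
have ri0 : 0 < rho^-1 by rewrite invr_gt0.
have rid : rho^-1 <= del.
  by rewrite -(@ler_pM2r _ rho) // mulVf ?gt_eqF //; lra.
have E1 : L2ip mu (zpos (fun t => wk t + rho * Ak t)) Bk = rho * L2ip mu an Bk.
  rewrite -L2ip_scalel //; apply: L2ip_ext => t; congr (_ * _).
  rewrite /an /zpos -pos_scale // mulrDr mulrA mulfV ?gt_eqF // mul1r //.
set Q := L2ip mu an Bk.
have hQ : `|Q| <= del * (2 * hn + `|D|).
  have h1 : rho * `|Q| <= del * hn + `|D| + hn.
    rewrite E1 in hdL; have := ler_normB (Dk + rho * Q) Dk.
    rewrite addrAC subrr add0r normrM gtr0_norm // -/Q in hdL *.
    have := ler_normD (Dk - D) D; rewrite subrK.
    move=> h2 h3; lra.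
  have h4 : `|Q| <= rho^-1 * (del * hn + `|D| + hn).
    by rewrite -(@ler_pM2l _ rho) // mulrA mulfV ?gt_eqF // mul1r.
  apply: le_trans h4 _.
  have := normr_ge0 Q; have := normr_ge0 D.
  have h5 : rho^-1 * (del * hn + `|D| + hn) <= del * (del * hn + `|D| + hn).
    by apply: ler_wpM2r => //; have := normr_ge0 D; nra.
  have hh : 0 <= del * hn * (1 - del) by apply: mulr_ge0; [apply: mulr_ge0 => //; exact: ltW | lra].
  nra.
have hdiff : L2norm mu (fun t => zpos A t - an t) <= del * (c + Wn).
  apply: le_trans (@L2norm_le _ _ _ mu _ (fun t => (A t - Ak t) + (- rho^-1) * wk t) _ _ _) _.
  - by apply: L2_sub => //; exact: L2_pos.
  - by apply: L2_add; [exact: L2_sub | exact: L2_scale].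
  - move=> t; rewrite /an /zpos; apply: le_trans (pos_lip _ _) _.
    by rewrite le_eqVlt; apply/orP; left; apply/eqP; congr `|_|; ring.
  apply: le_trans (L2norm_tri (L2_sub hA hAk) (L2_scale (- rho^-1) hw) (fun t => erefl)) _.
  rewrite L2norm_scale // normrN gtr0_norm //.
  have : rho^-1 * L2norm mu wk <= del * Wn.
    apply: ler_pM => //; [exact: ltW | exact: L2norm_ge0].
  lra.
have hzA := L2_pos hA.
have hP : L2ip mu (zpos A) B = L2ip mu (fun t => zpos A t - an t) B + (Q + L2ip mu an (fun t => B t - Bk t)).
  rewrite (@L2ip_addl (zpos A) (fun t => zpos A t - an t) an) //; last first.
    by move=> t; rewrite subrK.
    by apply: L2_sub.
  congr (_ + _); rewrite /Q; apply: L2ip_addr => //; first exact: L2_sub.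
  by move=> t; rewrite addrC subrK.
have hnan : L2norm mu an <= L2norm mu (zpos A) + del * (c + Wn).
  apply: le_trans (@L2norm_tri _ _ _ mu (zpos A) (fun t => (-1) * (zpos A t - an t)) an _ _ _) _.
  - exact: hzA.
  - by apply: L2_scale; exact: L2_sub.
  - by move=> t; ring.
  by rewrite L2norm_scale ?normrN ?normr1 ?mul1r ?lerD2l //; exact: L2_sub.
have hBB' : L2norm mu (fun t => B t - Bk t) <= c * del * hn.
  by rewrite (@L2norm_ext _ _ _ mu _ (fun t => Bk t - B t)) // => t; rewrite -sqrrN opprB.
rewrite hP; apply: le_trans (ler_normD _ _) _.
have T1 := CS (L2_sub hzA han) hB.
have T2 : `|Q + L2ip mu an (fun t => B t - Bk t)| <= `|Q| + L2norm mu an * L2norm mu (fun t => B t - Bk t).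
  apply: le_trans (ler_normD _ _) _; rewrite lerD2l; apply: CS => //; exact: L2_sub.
have nB := L2norm_ge0 mu B; have nA := L2norm_ge0 mu (zpos A).
have nan := L2norm_ge0 mu an; have nBB := L2norm_ge0 mu (fun t => B t - Bk t).
have nd := L2norm_ge0 mu (fun t => zpos A t - an t).
have X1 : L2norm mu (fun t => zpos A t - an t) * L2norm mu B <= del * (c + Wn) * L2norm mu B.
  by apply: ler_wpM2r.
have X2 : L2norm mu an * L2norm mu (fun t => B t - Bk t) <= (L2norm mu (zpos A) + c + Wn) * (c * del * hn).
  apply: ler_pM => //; nra.
have := normr_ge0 D.
nra.
Qed.

End KeyEst.

Section Misc.
Context {d : measure_display} {T : measurableType d} {R : realType}
        (mu : {measure set T -> \bar R}).

Lemma L2_neg u : L2mem mu u -> L2mem mu (fun t => - u t).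
Proof.
move=> hu; apply: (L2_domsq (v := fun t => u t ^+ 2)).
- exact: measurable_funN (L2_meas hu).
- exact: L2_int.
- by move=> t; rewrite sqrrN.
Qed.

Lemma L2_divr u (a : R) : L2mem mu u -> L2mem mu (fun t => u t / a).
Proof.
move=> hu; apply: (L2_domsq (v := fun t => a^-1 ^+ 2 * u t ^+ 2)).
- by apply: measurable_funM; [exact: L2_meas hu | exact: measurable_cst].
- exact: int_scale (L2_int hu).
- by move=> t; rewrite exprMn mulrC.
Qed.

End Misc.

Lemma pos_min_sq {R : realType} (E z : R) : 0 <= z -> Num.max E 0 ^+ 2 <= Num.min (- E) z ^+ 2.
Proof.
move=> z0; case: (leP E 0) => hE; first by rewrite expr0n sqr_ge0.
case: (leP (- E) z) => h; first by rewrite sqrrN.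
lra.
Qed.

Lemma zero_of_small {R : realType} (p K : R) :
  (forall del, 0 < del -> del <= 1 -> p <= del * K) -> p <= 0.
Proof.
move=> H; rewrite leNgt; apply/negP => p0.
have hK : p <= K by have := H 1 ltr01 (lexx _); rewrite mul1r.
have K0 : 0 < K by lra.
case: (leP (p / (2 * K)) 1) => h.
- have d0 : 0 < p / (2 * K) by rewrite divr_gt0 // mulr_gt0.
  have := H (p / (2 * K)) d0 h.
  have -> : p / (2 * K) * K = p / 2 by field; rewrite gt_eqF.
  move=> h2.
  have : p / 2 < p by rewrite ltr_pdivrMr //; lra.
  lra.
- move: h; rewrite ltr_pdivlMr ?mulr_gt0 //; lra.
Qed.

Unset Implicit Arguments. Set Strict Implicit.

Theorem theorem6p2 (R : realType) (X Y : completeNormedModType R)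
  (d : measure_display) (T : measurableType d) (mu : {measure set T -> \bar R})
  (e : Y -> T -> R) (f : X -> R) (g : X -> Y)
  (x : nat -> X) (lam : nat -> T -> R) (rho : nat -> R)
  (w : nat -> T -> R) (wmax : T -> R) (gamma tau : R) (xbar : X) :
  dense_embedding mu e ->
  C1_Frechet f -> C1_Frechet g ->
  ALM_run mu g e x lam rho w wmax gamma tau ->
  dL_to_zero mu f g e x rho w ->
  (exists phi : nat -> nat, (forall n, (phi n < phi n.+1)%N) /\
      (x \o phi) @ \oo --> xbar) ->
  let sq := fun z : X => L2norm mu (zpos (e (g z))) ^+ 2 in
  [/\ differentiable sq xbar,
      (forall h : X, 'd sq xbar h = 2 * L2ip mu (zpos (e (g xbar))) (e ('d g xbar h))) &
      (forall h : X, L2ip mu (zpos (e (g xbar))) (e ('d g xbar h)) = 0)].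
Proof.
move=> [elin eL2 [C eC] _ _] [fdiff fC1] [gdiff gC1] Halm HdL [phi [phiinc xphi]] sq.
have [Phid DPhid] := Phi_diff elin eL2 eC (g xbar).
have sqE : sq = Phi mu e \o g by [].
have dsq : differentiable sq xbar by rewrite sqE; exact: (differentiable_comp (gdiff xbar) Phid).
have Dsq : forall h, 'd sq xbar h = 2 * L2ip mu (zpos (e (g xbar))) (e ('d g xbar h)).
  by move=> h; rewrite sqE diff_comp // /= DPhid.
split => // h.
case: Halm => lam0 [rho0 [wmaxL2 [wmax0 [gam1 [[tau0 tau1] [Hw [Hlam Hrho]]]]]]].
have rho_pos : forall k, 0 < rho k.
  elim=> [//|k IH]; rewrite Hrho; case: ifP => _ //; rewrite mulr_gt0 //; lra.
have rho_up : forall k, rho k <= rho k.+1.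
  move=> k; rewrite Hrho; case: ifP => _ //; have := rho_pos k; nra.
have rho_mono : forall k m, (k <= m)%N -> rho k <= rho m.
  move=> k m /subnK <-; elim: (m - k)%N => [|j IH]; first by rewrite add0n.
  apply: le_trans IH _; rewrite addSn; exact: rho_up.
have phi_ge : forall n, (n <= phi n)%N.
  elim=> [//|n IH]; exact: leq_ltn_trans IH (phiinc n).
set a := zpos (e (g xbar)).
set b := e ('d g xbar h).
have ha : L2mem mu a := L2_pos (eL2 _).
have hb : L2mem mu b := eL2 _.
set res := alm_res mu g e x w rho.
have res_ge0 : forall k, 0 <= res k by move=> k; exact: L2norm_ge0.
have sq_res : forall k, sq (x k.+1) <= res k ^+ 2.
  move=> k; rewrite /sq /res /alm_res !L2normK; apply: Nsq_le_ae.
  - exact: L2_pos (eL2 _).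
  - apply: L2_min; first exact: L2_neg (eL2 _).
    exact: L2_divr (Hw k).1.
  - apply: filterS (Hw k).2.1 => t wt0; rewrite /zpos /zmin.
    by apply: pos_min_sq; rewrite divr_ge0 // ltW.
have [[M HM]|unb] := pselect (exists M, forall k, rho k <= M).
-
  have [K HK] : exists K, forall k, (K <= k)%N -> rho k.+1 = rho k.
    apply: contrapT => nK.
    have nK' : forall K, exists k, (K <= k)%N /\ rho k.+1 = gamma * rho k.
      move=> K; apply: contrapT => H; apply: nK; exists K => k Kk.
      apply: contrapT => H'; apply: H; exists k; split => //.
      by move: H'; rewrite Hrho; case: ifP.
    have grow : forall n, exists K, rho 0%N + n%:R * ((gamma - 1) * rho 0%N) <= rho K.
      elim=> [|n [K IH]]; first by exists 0%N; rewrite mul0r addr0.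
      have [k [Kk jk]] := nK' K; exists k.+1; rewrite jk -natr1.
      have := rho_mono _ _ Kk; have := rho_mono _ _ (leq0n k); have := rho_pos 0%N.
      nra.
    have q0 : 0 < (gamma - 1) * rho 0%N by apply: mulr_gt0 => //; lra.
    have [K IH] := grow (Num.truncn (M / ((gamma - 1) * rho 0%N))).+1.
    have := truncnS_gt (M / ((gamma - 1) * rho 0%N)).
    rewrite ltr_pdivrMr // => h1; have := HM K; have := rho_pos 0%N.
    lra.
  have res_dec : forall k, (K.+1 <= k)%N -> res k <= tau * res k.-1.
    move=> k Kk; have := Hrho k; rewrite HK; last by apply: ltnW.
    case: ifP => [/orP [/eqP k0|//]|_].
      by move: Kk; rewrite k0.
    by move=> h1; have := rho_pos k; nra.
  have geo : forall j, res (K + j)%N <= tau ^+ j * res K.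
    elim=> [|j IH]; first by rewrite addn0 expr0 mul1r.
    have := res_dec (K + j.+1)%N; rewrite addnS ltnS leq_addr /= => /(_ isT) h1.
    apply: le_trans h1 _; rewrite exprS -mulrA; apply: ler_wpM2l; [lra | exact: IH].
  have geo2 : forall j, res (K + j)%N ^+ 2 <= (tau ^+ 2) ^+ j * res K ^+ 2.
    move=> j; rewrite -exprM mulnC exprM -exprMn; apply: lerXn2r; rewrite ?nnegrE //.
      by rewrite mulr_ge0 // exprn_ge0 // ltW.
  have sq0 : sq xbar <= 0.
    apply/ler_addgt0Pr => eps eps0; rewrite add0r.
    have csq : (sq \o (x \o phi)) @ \oo --> sq xbar.
      apply: cvg_comp xphi _; exact: differentiable_continuous dsq.
    have e2 : 0 < eps / 2 by rewrite divr_gt0.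
    have [N1 _ HN1] := cvgr_dist_lt _ _ csq _ e2.
    have t2 : `|tau ^+ 2| < 1.
      rewrite ger0_norm ?sqr_ge0 //; have := mulr_ge0 (ltW tau0) (ltW tau0); nra.
    have c1 : 0 < (eps / 2) / (res K ^+ 2 + 1).
      by rewrite divr_gt0 // ltr_wpDl // sqr_ge0.
    have [N2 _ HN2] := cvgr0_norm_lt _ (cvg_expr t2) _ c1.
    set n := maxn N1 (K + N2).+1.
    have h1 := HN1 n (leq_maxl _ _).
    have hn : ((K + N2).+1 <= phi n)%N by apply: leq_trans (phi_ge n); exact: leq_maxr.
    have pn : phi n = ((phi n).-1).+1 by rewrite prednK // (leq_trans _ hn).
    set k := (phi n).-1 in pn.
    have Kk : (K + N2 <= k)%N by rewrite -ltnS -pn.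
    have kE : k = (K + (k - K))%N by rewrite subnKC // (leq_trans (leq_addr _ _) Kk).
    have kK : (N2 <= k - K)%N by rewrite leq_subRL ?(leq_trans (leq_addr _ _) Kk).
    have h2 := HN2 (k - K)%N kK.
    have h3 := sq_res k; rewrite -pn in h3.
    have h4 := geo2 (k - K)%N; rewrite -kE in h4.
    move: h1 h2 => /= h1 h2.
    have h5 : (tau ^+ 2) ^+ (k - K) * res K ^+ 2 <= eps / 2.
      rewrite ger0_norm in h2; last by rewrite exprn_ge0 // sqr_ge0.
      move: h2; rewrite ltr_pdivlMr ?ltr_wpDl ?sqr_ge0 // => h2.
      have := sqr_ge0 (res K); have := exprn_ge0 (k - K) (sqr_ge0 tau); nra.
    have := ler_norm (sq xbar - sq (x (phi n))); lra.
  have na0 : L2norm mu a = 0.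
    have := L2norm_ge0 mu a; move: sq0; rewrite /sq -/a; nra.
  apply/eqP; rewrite -normr_le0; apply: le_trans (CS ha hb) _.
  by rewrite na0 mul0r.
have big : forall M, exists K, forall k, (K <= k)%N -> M < rho k.
  move=> M; apply: contrapT => nb; apply: unb; exists M => k.
  rewrite leNgt; apply/negP => Mk; apply: nb; exists k => k' kk'.
  exact: lt_le_trans Mk (rho_mono _ _ kk').
set Wn := L2norm mu wmax.
set c := `|C|.
have c0 : 0 <= c by exact: normr_ge0.
have W0 : 0 <= Wn by exact: L2norm_ge0.
have hn0 : 0 <= `|h| by exact: normr_ge0.
apply/eqP; rewrite -normr_le0.
apply: (@zero_of_small _ _ ((c + Wn) * L2norm mu b + (L2norm mu a + c + Wn) * c * `|h| + 2 * `|h| + `|'d f xbar h|)).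
move=> del d0 d1.
have gc : (g \o (x \o phi)) @ \oo --> g xbar.
  apply: cvg_comp xphi _; exact: differentiable_continuous (gdiff xbar).
have [N1 _ HN1] := cvgr_dist_lt _ _ gc _ d0.
have [N2 HN2] := big del^-1.
have [N3 _ HN3] := HdL del d0.
have [N4 _ HN4] := xphi _ (gC1 xbar del d0).
have [N5 _ HN5] := xphi _ (fC1 xbar 1 ltr01).
set n := maxn (maxn (maxn N1 N4) N5) (maxn N2 N3).+1.
have hn1 : (N1 <= n)%N by rewrite /n !leq_max leqnn.
have hn4 : (N4 <= n)%N by rewrite /n !leq_max leqnn !orbT.
have hn5 : (N5 <= n)%N by rewrite /n !leq_max leqnn !orbT.
have hnm : ((maxn N2 N3).+1 <= phi n)%N by apply: leq_trans (phi_ge n); rewrite /n leq_max leqnn orbT.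
have pn : phi n = ((phi n).-1).+1 by rewrite prednK // (leq_trans _ hnm).
set k := (phi n).-1 in pn.
have kN2 : (N2 <= k)%N by move: hnm; rewrite pn ltnS geq_max => /andP [].
have kN3 : (N3 <= k)%N by move: hnm; rewrite pn ltnS geq_max => /andP [].
have E1 := HN1 n hn1.
have E2 := HN2 k kN2.
have E3 := HN3 k kN3.
have E4 := HN4 n hn4.
have E5 := HN5 n hn5.
move: E1 E3 E4 E5 => /= E1 E3 E4 E5.
rewrite -pn in E3.
set xk := x (phi n) in E1 E3 E4 E5.
have hwk := (Hw k).1.
have rk0 := rho_pos k.
have dr : 1 < del * rho k.
  by rewrite -(ltr_pM2l d0) mulfV ?gt_eqF in E2.
apply: (@key_est _ _ _ mu (e (g xbar)) (e (g xk)) b (e ('d g xk h)) (w k) (rho k) del ('d f xk h) ('d f xbar h) `|h| c Wn) => //.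
- apply: L2norm_le_ae => //.
  apply: filterS2 (Hw k).2.1 (Hw k).2.2 => t h1 h2; nra.
- exact: E3 h.
- by have := E5 h; rewrite mul1r.
- rewrite (@L2norm_ext _ _ _ mu _ (e (g xbar - g xk))); last by move=> t; rewrite (eB elin).
  apply: le_trans (eC' eC _) _; rewrite /c; apply: ler_wpM2l => //; exact: ltW.
- rewrite (@L2norm_ext _ _ _ mu _ (e ('d g xk h - 'd g xbar h))); last by move=> t; rewrite (eB elin).
  apply: le_trans (eC' eC _) _; rewrite /c -mulrA; apply: ler_wpM2l => //.
Qed.
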